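(* Let $\mathcal{Q}=\left(\frac{\lambda,\ \mu}{F}\right)$ be a generalized quaternion algebra and $\mathbf{a}=a_1i+a_2j+a_3k$, $\mathbf{b}=b_1i+b_2j+b_3k$ pure quaternions. Then $\mathbf{a},\mathbf{b},\mathbf{a}\times\mathbf{b}$ are linearly dependent over $F$ if and only if $N(\mathbf{a})N(\mathbf{b})=(\mathbf{a}\cdot\mathbf{b})^2$. This is equivalent to $N(\mathbf{a}\times\mathbf{b})=0$, i.e. to $-\mu(a_2b_3-a_3b_2)^2-\lambda(a_1b_3-a_3b_1)^2+(a_1b_2-a_2b_1)^2=0$; that is, $\mathbf{a}\times\mathbf{b}$ is isotropic or zero.
   Context: $F$ is a field of characteristic $\neq2$, $\lambda,\mu\in F$ nonzero; $\mathcal{Q}$ has $F$-basis $1,i,j,k$ with $i^2=\lambda$, $j^2=\mu$, $ij=-ji=k$. Norm: $N(x_0+x_1i+x_2j+x_3k)=x_0^2-\lambda x_1^2-\mu x_2^2+\lambda\mu x_3^2$. For pure $\mathbf{a},\mathbf{b}$: $\mathbf{a}\cdot\mathbf{b}=-\lambda a_1b_1-\mu a_2b_2+\lambda\mu a_3b_3$ and $\mathbf{a}\times\mathbf{b}=-\mu(a_2b_3-a_3b_2)\,i+\lambda(a_1b_3-a_3b_1)\,j+(a_1b_2-a_2b_1)\,k$. A nonzero element $X$ is isotropic if $N(X)=0$. *)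

(* Defs.v *)
From HB Require Import structures.
From mathcomp Require Import all_boot all_algebra.
Set Implicit Arguments. Unset Strict Implicit. Unset Printing Implicit Defensive.
Import GRing.Theory.
Local Open Scope ring_scope.

(* Elements of the generalized quaternion algebra (lambda, mu / F), written in
   the F-basis 1, i, j, k:  x0 + x1 i + x2 j + x3 k. *)
Record quat (F : fieldType) := Quat { q0 : F; q1 : F; q2 : F; q3 : F }.

Definition pure (F : fieldType) (a1 a2 a3 : F) : quat F := Quat 0 a1 a2 a3.

Definition qnorm (F : fieldType) (lam mu : F) (x : quat F) : F :=
  q0 x ^+ 2 - lam * q1 x ^+ 2 - mu * q2 x ^+ 2 + lam * mu * q3 x ^+ 2.

Definition qdot (F : fieldType) (lam mu : F) (a b : quat F) : F :=
  - lam * q1 a * q1 b - mu * q2 a * q2 b + lam * mu * q3 a * q3 b.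

Definition qcross (F : fieldType) (lam mu : F) (a b : quat F) : quat F :=
  pure (- mu * (q2 a * q3 b - q3 a * q2 b))
       (lam * (q1 a * q3 b - q3 a * q1 b))
       (q1 a * q2 b - q2 a * q1 b).

Definition qzero (F : fieldType) : quat F := Quat 0 0 0 0.

Definition qadd (F : fieldType) (x y : quat F) : quat F :=
  Quat (q0 x + q0 y) (q1 x + q1 y) (q2 x + q2 y) (q3 x + q3 y).

Definition qscale (F : fieldType) (c : F) (x : quat F) : quat F :=
  Quat (c * q0 x) (c * q1 x) (c * q2 x) (c * q3 x).

Definition lin_dep3 (F : fieldType) (u v w : quat F) : Prop :=
  exists x y z : F, ~ (x = 0 /\ y = 0 /\ z = 0) /\
    qadd (qadd (qscale x u) (qscale y v)) (qscale z w) = qzero F.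

Definition isotropic (F : fieldType) (lam mu : F) (X : quat F) : Prop :=
  X <> qzero F /\ qnorm lam mu X = 0.

(* Main.v *)
Require Import Defs.
From mathcomp Require Import all_boot all_algebra.
From mathcomp Require Import ring.
From Stdlib Require Import Classical.
Local Open Scope ring_scope.
Import GRing.Theory.

Section S.
Variable F : fieldType.

Lemma quat_ext (x y : quat F) :
  q0 x = q0 y -> q1 x = q1 y -> q2 x = q2 y -> q3 x = q3 y -> x = y.
Proof. by case: x; case: y => /= ? ? ? ? ? ? ? ? -> -> -> ->. Qed.

Lemma dep_iff (lam mu a1 a2 a3 b1 b2 b3 : F) (hlam : lam != 0) (hmu : mu != 0) :
  let c1 := - mu * (a2 * b3 - a3 * b2) in
  let c2 := lam * (a1 * b3 - a3 * b1) in
  let c3 := a1 * b2 - a2 * b1 in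
  let D := - mu * (a2 * b3 - a3 * b2) ^+ 2 - lam * (a1 * b3 - a3 * b1) ^+ 2
       + (a1 * b2 - a2 * b1) ^+ 2 in
  (exists x y z : F, ~ (x = 0 /\ y = 0 /\ z = 0) /\
     x * a1 + y * b1 + z * c1 = 0 /\ x * a2 + y * b2 + z * c2 = 0 /\
     x * a3 + y * b3 + z * c3 = 0) <-> D = 0.
Proof.
move=> c1 c2 c3 D; split.
  move=> [x [y [z [nz [E1 [E2 E3]]]]]].
  have hx : D * x = (x * a1 + y * b1 + z * c1) * (b2 * c3 - b3 * c2)
     + (x * a2 + y * b2 + z * c2) * (b3 * c1 - b1 * c3)
     + (x * a3 + y * b3 + z * c3) * (b1 * c2 - b2 * c1).
    by rewrite /D /c1 /c2 /c3; ring.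
  have hy : D * y = (x * a1 + y * b1 + z * c1) * (c2 * a3 - c3 * a2)
     + (x * a2 + y * b2 + z * c2) * (c3 * a1 - c1 * a3)
     + (x * a3 + y * b3 + z * c3) * (c1 * a2 - c2 * a1).
    by rewrite /D /c1 /c2 /c3; ring.
  have hz : D * z = (x * a1 + y * b1 + z * c1) * (a2 * b3 - a3 * b2)
     + (x * a2 + y * b2 + z * c2) * (a3 * b1 - a1 * b3)
     + (x * a3 + y * b3 + z * c3) * (a1 * b2 - a2 * b1).
    by rewrite /D /c1 /c2 /c3; ring.
  rewrite E1 E2 E3 !mul0r !addr0 in hx hy hz.
  apply/eqP; apply: contraT => nD; exfalso; apply: nz.
  move/eqP: hx; rewrite mulf_eq0 (negPf nD) /= => /eqP ->.
  move/eqP: hy; rewrite mulf_eq0 (negPf nD) /= => /eqP ->.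
  by move/eqP: hz; rewrite mulf_eq0 (negPf nD) /= => /eqP ->.
move=> hD.
have [cA|nA] := eqVneq (a2 * b3 - a3 * b2) 0;
 [have [cB|nB] := eqVneq (a1 * b3 - a3 * b1) 0;
  [have [cC|nC] := eqVneq (a1 * b2 - a2 * b1) 0 |] |].
- exists 0, 0, 1; split; first by case=> _ [_ /eqP]; rewrite oner_eq0.
  by rewrite /c1 /c2 /c3 cA cB cC; split; [|split]; ring.
- exists (b1 * c2 - b2 * c1), (c1 * a2 - c2 * a1), (a1 * b2 - a2 * b1).
  split; first by case=> _ [_ h]; move: nC; rewrite h eqxx.
  split; first by rewrite /c1 /c2 /c3; ring.
  split; first by rewrite /c1 /c2 /c3; ring.
  by rewrite -hD /D /c1 /c2 /c3; ring.
- exists (b3 * c1 - b1 * c3), (c3 * a1 - c1 * a3), (a3 * b1 - a1 * b3).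
  split; first by case=> _ [_ h]; move: nB; rewrite -opprB h oppr0 eqxx.
  split; first by rewrite /c1 /c2 /c3; ring.
  split; first by rewrite -hD /D /c1 /c2 /c3; ring.
  by rewrite /c1 /c2 /c3; ring.
- exists (b2 * c3 - b3 * c2), (c2 * a3 - c3 * a2), (a2 * b3 - a3 * b2).
  split; first by case=> _ [_ h]; move: nA; rewrite h eqxx.
  split; first by rewrite -hD /D /c1 /c2 /c3; ring.
  by split; rewrite /c1 /c2 /c3; ring.
Qed.
End S.

Theorem lemma3p5 (F : fieldType) (hchar : (2%:R : F) != 0)
    (lam mu : F) (hlam : lam != 0) (hmu : mu != 0)
    (a1 a2 a3 b1 b2 b3 : F) :
  let a := pure a1 a2 a3 in
  let b := pure b1 b2 b3 in
  (lin_dep3 a b (qcross lam mu a b) <->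
     qnorm lam mu a * qnorm lam mu b = (qdot lam mu a b) ^+ 2)
  /\ (qnorm lam mu a * qnorm lam mu b = (qdot lam mu a b) ^+ 2 <->
     qnorm lam mu (qcross lam mu a b) = 0)
  /\ (qnorm lam mu (qcross lam mu a b) = 0 <->
     - mu * (a2 * b3 - a3 * b2) ^+ 2 - lam * (a1 * b3 - a3 * b1) ^+ 2
       + (a1 * b2 - a2 * b1) ^+ 2 = 0)
  /\ (qnorm lam mu (qcross lam mu a b) = 0 <->
     isotropic lam mu (qcross lam mu a b) \/ qcross lam mu a b = qzero F).
Proof.
move=> a b.
set D := - mu * (a2 * b3 - a3 * b2) ^+ 2 - lam * (a1 * b3 - a3 * b1) ^+ 2
       + (a1 * b2 - a2 * b1) ^+ 2.
have hN : qnorm lam mu (qcross lam mu a b) = lam * mu * D.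
  by rewrite /qnorm /qcross /D /a /b /pure /=; ring.
have hL : qnorm lam mu a * qnorm lam mu b
          = qdot lam mu a b ^+ 2 + qnorm lam mu (qcross lam mu a b).
  by rewrite /qnorm /qdot /qcross /a /b /pure /=; ring.
have hND : qnorm lam mu (qcross lam mu a b) = 0 <-> D = 0.
  rewrite hN; split; last by move->; rewrite mulr0.
  by move/eqP; rewrite !mulf_eq0 (negPf hlam) (negPf hmu) /= => /eqP.
have hLN : qnorm lam mu a * qnorm lam mu b = qdot lam mu a b ^+ 2 <->
           qnorm lam mu (qcross lam mu a b) = 0.
  rewrite hL; split; last by move->; rewrite addr0.
  by move/eqP; rewrite -subr_eq0 addrC addKr => /eqP.
have hdep : lin_dep3 a b (qcross lam mu a b) <-> D = 0.
  rewrite -(@dep_iff F lam mu a1 a2 a3 b1 b2 b3 hlam hmu); split.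
    move=> [x [y [z [nz E]]]]; exists x, y, z; split => //.
    have E1 := f_equal (@q1 F) E; have E2 := f_equal (@q2 F) E;
    have E3 := f_equal (@q3 F) E; move: E1 E2 E3.
    by rewrite /a /b /qcross /pure /=.
  move=> [x [y [z [nz [E1 [E2 E3]]]]]]; exists x, y, z; split => //.
  apply: quat_ext; rewrite /a /b /qcross /pure /= ?E1 ?E2 ?E3 //.
  by rewrite !mulr0 !addr0.
split; first by rewrite hdep -hND hLN.
split; first exact: hLN.
split; first exact: hND.
split.
  move=> h0; case: (classic (qcross lam mu a b = qzero F)) => [->|nz]; first by right.
  by left; split.
by case=> [[_ ->]|->] //; rewrite /qnorm /qzero /=; ring.
Qed.
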